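(* Let $\mathcal{H}$ be a complex Hilbert space, let $B,X\in\mathcal{B}(\mathcal{H})$, and let $A\in\mathcal{B}(\mathcal{H})$ be positive and invertible. Let $M=\begin{pmatrix} A & X\\ X^{*} & B\end{pmatrix}\in\mathcal{B}(\mathcal{H}\oplus\mathcal{H})$, and assume that $AB-X^{*}X=0$ and $AX=XA$. Then there exists $W\in\mathcal{B}(\mathcal{H})$ such that $X=AW$ and $B=W^{*}AW$, i.e. $$M=\begin{pmatrix} A & AW\\ W^{*}A & W^{*}AW\end{pmatrix}.$$
   Context: Here $\det M:=AB-X^{*}X$. A matrix of the displayed form is called a flat extension of $A$. *)

(* Defs.v *)
From HB Require Import structures.
From mathcomp Require Import all_boot all_order all_algebra.
From mathcomp Require Import reals complex.
Set Implicit Arguments. Unset Strict Implicit. Unset Printing Implicit Defensive.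
Import Order.TTheory GRing.Theory Num.Theory.
Local Open Scope ring_scope.

Section Hilbert.
Variables (R : realType) (V : lmodType R[i]) (inner : V -> V -> R[i]).

Definition is_inner_product : Prop :=
  [/\ (forall (a : R[i]) (x y z : V), inner (a *: x + y) z = a * inner x z + inner y z),
      (forall x y : V, inner y x = Num.conj (inner x y)),
      (forall x : V, 0 <= inner x x) &
      (forall x : V, inner x x = 0 -> x = 0)].

Definition hnorm (x : V) : R := Num.sqrt (complex.Re (inner x x)).

Definition hcauchy (u : nat -> V) : Prop :=
  forall e : R, 0 < e -> exists N : nat, forall m n : nat,
    (N <= m)%N -> (N <= n)%N -> hnorm (u m - u n) < e.

Definition hconverges (u : nat -> V) (l : V) : Prop :=
  forall e : R, 0 < e -> exists N : nat, forall n : nat,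
    (N <= n)%N -> hnorm (u n - l) < e.

Definition is_hilbert : Prop :=
  is_inner_product /\
  (forall u : nat -> V, hcauchy u -> exists l : V, hconverges u l).

Definition bounded_op (T : V -> V) : Prop :=
  (forall (a : R[i]) (x y : V), T (a *: x + y) = a *: T x + T y) /\
  (exists K : R, forall x : V, hnorm (T x) <= K * hnorm x).

Definition is_adjoint (T S : V -> V) : Prop :=
  forall x y : V, inner (T x) y = inner x (S y).

Definition positive_op (A : V -> V) : Prop :=
  forall x : V, 0 <= inner (A x) x.

Definition invertible_op (A : V -> V) : Prop :=
  exists Ai : V -> V, bounded_op Ai /\
    (forall x, A (Ai x) = x) /\ (forall x, Ai (A x) = x).

End Hilbert.

(* Main.v *)
Require Import Defs.
From HB Require Import structures.
From mathcomp Require Import all_boot all_order all_algebra.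
From mathcomp Require Import reals complex.
From mathcomp Require Import ring.
Import Order.TTheory GRing.Theory Num.Theory.
Local Open Scope ring_scope.

Section Aux.
Variables (R : realType) (V : lmodType R[i]) (inner : V -> V -> R[i]).
Hypothesis Hi : is_inner_product inner.

Lemma ip_lin a x y z : inner (a *: x + y) z = a * inner x z + inner y z.
Proof. by case: Hi. Qed.
Lemma ip_sym x y : inner y x = (inner x y)^*.
Proof. by case: Hi => _ h _ _; apply: h. Qed.
Lemma ip_def x : inner x x = 0 -> x = 0.
Proof. by case: Hi => _ _ _ h; apply: h. Qed.
Lemma ip_ge0 x : 0 <= inner x x.
Proof. by case: Hi => _ _ h _; apply: h. Qed.

Lemma ip0l z : inner 0 z = 0.
Proof.
have h := ip_lin 1 0 0 z; rewrite scaler0 addr0 mul1r in h.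
by apply: (@addrI _ (inner 0 z)); rewrite addr0 -h.
Qed.
Lemma ipDl x y z : inner (x + y) z = inner x z + inner y z.
Proof. by rewrite -[x]scale1r ip_lin mul1r scale1r. Qed.
Lemma ipZl a x z : inner (a *: x) z = a * inner x z.
Proof. by rewrite -[a *: x]addr0 ip_lin ip0l addr0. Qed.
Lemma ipNl x z : inner (- x) z = - inner x z.
Proof. by rewrite -scaleN1r ipZl mulN1r. Qed.
Lemma ipDr x y z : inner z (x + y) = inner z x + inner z y.
Proof. by rewrite ip_sym ipDl rmorphD /= -!ip_sym. Qed.
Lemma ipZr a x z : inner z (a *: x) = a^* * inner z x.
Proof. by rewrite ip_sym ipZl rmorphM /= -!ip_sym. Qed.

Lemma ip_ext u v : (forall x, inner x u = inner x v) -> u = v.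
Proof.
move=> h; apply/eqP; rewrite -subr_eq0; apply/eqP/ip_def.
rewrite ipDl ipNl.
have h' : forall x, inner u x = inner v x by move=> x; rewrite ip_sym h -ip_sym.
by rewrite h' subrr.
Qed.

Lemma lin0 (T : V -> V) : (forall a x y, T (a *: x + y) = a *: T x + T y) -> T 0 = 0.
Proof.
move=> hT; have h := hT 1 0 0; rewrite scaler0 addr0 scale1r in h.
by apply: (@addrI _ (T 0)); rewrite addr0 -h.
Qed.
Lemma linD (T : V -> V) : (forall a x y, T (a *: x + y) = a *: T x + T y) ->
  forall x y, T (x + y) = T x + T y.
Proof. by move=> hT x y; rewrite -[x]scale1r hT !scale1r. Qed.
Lemma linZ (T : V -> V) : (forall a x y, T (a *: x + y) = a *: T x + T y) ->
  forall a x, T (a *: x) = a *: T x.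
Proof. by move=> hT a x; rewrite -[a *: x]addr0 hT lin0 // addr0. Qed.

Lemma pos_sa (A : V -> V) : (forall a x y, A (a *: x + y) = a *: A x + A y) ->
  (forall x, 0 <= inner (A x) x) -> forall x y, inner (A x) y = inner x (A y).
Proof.
move=> hl hp.
pose f x y := inner (A x) y - inner x (A y).
have f0 : forall x, f x x = 0.
  by move=> x; rewrite /f [inner x (A x)]ip_sym geC0_conj // subrr.
have fD : forall x y z, f (x + y) z = f x z + f y z.
  move=> x y z; rewrite /f (@linD A hl) !ipDl; ring.
have fDr : forall x y z, f z (x + y) = f z x + f z y.
  move=> x y z; rewrite /f (@linD A hl) !ipDr; ring.
have fZ : forall a x z, f (a *: x) z = a * f x z.
  move=> a x z; rewrite /f (@linZ A hl) !ipZl; ring.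
have fZr : forall a x z, f z (a *: x) = a^* * f z x.
  move=> a x z; rewrite /f (@linZ A hl) !ipZr; ring.
move=> x y; apply/eqP; rewrite -subr_eq0 -/(f x y); apply/eqP.
have s1 : f x y + f y x = 0.
  by have := f0 (x + y); rewrite fD !fDr !f0 add0r addr0.
have s2 : f x y - f y x = 0.
  have := f0 (x + 'i *: y); rewrite fD !fDr !f0 fZ fZr add0r addr0.
  rewrite conjCi => h.
  have : 'i * (f y x - f x y) = 0 by rewrite -h; ring.
  move/eqP; rewrite mulf_eq0 (negbTE (@neq0Ci _)) /= subr_eq0 => /eqP ->.
  by rewrite subrr.
have : (f x y) *+ 2 = 0.
  have -> : f x y *+ 2 = (f x y + f y x) + (f x y - f y x) by ring.
  by rewrite s1 s2 addr0.
by move/eqP; rewrite mulrn_eq0 /= => /eqP.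
Qed.

End Aux.

Theorem proposition2p12 (R : realType) (V : lmodType R[i])
  (inner : V -> V -> R[i]) (Hh : is_hilbert inner)
  (A B X Xs : V -> V)
  (hA : bounded_op inner A) (hB : bounded_op inner B)
  (hX : bounded_op inner X) (hXs : bounded_op inner Xs)
  (hXadj : is_adjoint inner X Xs)
  (hApos : positive_op inner A) (hAinv : invertible_op inner A)
  (hdet : forall x : V, A (B x) - Xs (X x) = 0)
  (hcomm : forall x : V, A (X x) = X (A x)) :
  exists W Ws : V -> V,
    [/\ bounded_op inner W, bounded_op inner Ws, is_adjoint inner W Ws,
        (forall x : V, X x = A (W x)) &
        (forall x : V, B x = Ws (A (W x)))].
Proof.
case: Hh => Hi _.
case: hAinv => Ai [[hAil [Ka hKa]] [AAi AiA]].
case: hA => hAl _; case: hX => hXl [Kx hKx]; case: hXs => hXsl [Kxs hKxs].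
have Asa := @pos_sa _ _ _ Hi _ hAl hApos.
have Aisa : forall x y, inner (Ai x) y = inner x (Ai y).
  by move=> x y; rewrite -[in LHS](AAi y) -Asa AAi.
have XsA : forall y, Xs (A y) = A (Xs y).
  move=> y; apply: (@ip_ext _ _ _ Hi) => x.
  by rewrite -hXadj -Asa hcomm hXadj Asa.
have XsAi : forall y, Xs (Ai y) = Ai (Xs y).
  by move=> y; rewrite -[LHS]AiA -XsA AAi.
have n0 : forall z, 0 <= hnorm inner z by move=> z; exact: sqrtr_ge0.
exists (fun x => Ai (X x)), (fun x => Xs (Ai x)); split.
- split; first by move=> a x y /=; rewrite hXl hAil.
  exists (`|Ka| * `|Kx|) => x.
  apply: (le_trans (hKa _)); apply: (le_trans (ler_wpM2r (n0 _) (ler_norm Ka))).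
  rewrite -mulrA; apply: ler_wpM2l; first exact: normr_ge0.
  apply: (le_trans (hKx x)); apply: ler_wpM2r; [exact: n0 | exact: ler_norm].
- split; first by move=> a x y /=; rewrite hAil hXsl.
  exists (`|Kxs| * `|Ka|) => x.
  apply: (le_trans (hKxs _)); apply: (le_trans (ler_wpM2r (n0 _) (ler_norm Kxs))).
  rewrite -mulrA; apply: ler_wpM2l; first exact: normr_ge0.
  apply: (le_trans (hKa x)); apply: ler_wpM2r; [exact: n0 | exact: ler_norm].
- by move=> x y; rewrite Aisa hXadj.
- by move=> x; rewrite AAi.
- move=> x; rewrite AiA XsAi.
  have := hdet x; move/eqP; rewrite subr_eq0 => /eqP <-.
  by rewrite AiA.
Qed.
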